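(* Let $g\le h$ and let $A$ be a tuple of $h$ self-adjoint complex matrices such that $\mathcal D_A\subseteq SM(\mathbb C)^h$ is bounded and $\mathcal D_A(2)$ is closed under entrywise complex conjugation. Then every Euclidean extreme point of the convex set $\mathcal P_g\mathcal D_A(1)\subseteq\mathbb R^g$ is a free extreme point of the matrix convex set $\mathcal P_g\mathcal D_A$.
   Context: For $A\in SM_d(\mathbb C)^h$, $\mathcal D_A=\bigcup_n\mathcal D_A(n)$, $\mathcal D_A(n)=\{X\in SM_n(\mathbb C)^h: I-\sum_iA_i\otimes X_i\succeq0\}$. For a set $K$ of $h$-tuples and $g\le h$, $\mathcal P_gK$ consists of all $X\in SM_n^g$ with $(X,Y)\in K$ for some $Y\in SM_n^{h-g}$; $\mathcal P_g\mathcal D_A(1)$ is its first level. A point $X\in K(n)$ is a free extreme point of a matrix convex set $K$ if whenever $X=\sum_iV_i^*X^{(i)}V_i$ with $X^{(i)}\in K$, $V_i\neq0$, $\sum_iV_i^*V_i=I$, each $X^{(i)}$ is unitarily equivalent to $X$ or to $X\oplus Z$ for some $Z\in K$. *)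

(* Defs.v *)
From mathcomp Require Import all_boot all_algebra.
From mathcomp Require Import complex mxtens reals.
Unset Strict Implicit. Unset Printing Implicit Defensive.
Import GRing.Theory Num.Theory.
Local Open Scope ring_scope.

Section Defs.
Variable R : realType.
Local Notation C := (R[i]).

Definition adj {p q : nat} (M : 'M[C]_(p, q)) : 'M[C]_(q, p) :=
  map_mx (@Num.conj C) M^T.

Definition herm {n : nat} (M : 'M[C]_n) : Prop := adj M = M.

Definition psd {n : nat} (M : 'M[C]_n) : Prop :=
  herm M /\ forall v : 'cV[C]_n, 0 <= (adj v *m M *m v) 0 0.

Definition sa_tuple {k n : nat} (X : 'I_k -> 'M[C]_n) : Prop :=
  forall i, herm (X i).

Definition LMIdom {h d : nat} (A : 'I_h -> 'M[C]_d) (n : nat)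
    (X : 'I_h -> 'M[C]_n) : Prop :=
  sa_tuple X /\ psd (1%:M - \sum_(i < h) (A i *t X i)).

Definition LMIbounded {h d : nat} (A : 'I_h -> 'M[C]_d) : Prop :=
  exists c : C, forall (n : nat) (X : 'I_h -> 'M[C]_n),
    LMIdom A n X -> psd (c%:M - \sum_(i < h) (X i *m X i)).

Definition conj_closed2 {h d : nat} (A : 'I_h -> 'M[C]_d) : Prop :=
  forall X : 'I_h -> 'M[C]_2,
    LMIdom A 2 X -> LMIdom A 2 (fun i => map_mx (@Num.conj C) (X i)).

Definition concat {g k n : nat} (X : 'I_g -> 'M[C]_n) (Y : 'I_k -> 'M[C]_n)
    : 'I_(g + k) -> 'M[C]_n :=
  fun i => match split i with inl j => X j | inr j => Y j end.

Definition proj {g k : nat} (K : forall n, ('I_(g + k) -> 'M[C]_n) -> Prop)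
    (n : nat) (X : 'I_g -> 'M[C]_n) : Prop :=
  exists Y : 'I_k -> 'M[C]_n, sa_tuple Y /\ K n (concat X Y).

Definition unit_equiv {g p q : nat} (Y : 'I_g -> 'M[C]_p) (X : 'I_g -> 'M[C]_q)
    : Prop :=
  exists U : 'M[C]_(p, q), U *m adj U = 1%:M /\ adj U *m U = 1%:M /\
    forall j, Y j = U *m X j *m adj U.

Definition free_extreme {g : nat} (K : forall n, ('I_g -> 'M[C]_n) -> Prop)
    (n : nat) (X : 'I_g -> 'M[C]_n) : Prop :=
  K n X /\
  forall (m : nat) (ns : 'I_m -> nat) (Xs : forall i, 'I_g -> 'M[C]_(ns i))
         (V : forall i, 'M[C]_(ns i, n)),
    (forall i, K (ns i) (Xs i)) ->
    (forall i, V i != 0) ->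
    \sum_(i < m) (adj (V i) *m V i) = 1%:M ->
    (forall j, X j = \sum_(i < m) (adj (V i) *m Xs i j *m V i)) ->
    forall i, unit_equiv (Xs i) X \/
      exists (p : nat) (Z : 'I_g -> 'M[C]_p), K p Z /\
        unit_equiv (Xs i) (fun j => block_mx (X j) 0 0 (Z j)).

(* Euclidean extreme point of a set S of level-1 g-tuples (a subset of R^g,
   identifying self-adjoint 1x1 matrices with reals) *)
Definition euclid_extreme {g : nat} (S : ('I_g -> 'M[C]_1) -> Prop)
    (X : 'I_g -> 'M[C]_1) : Prop :=
  S X /\ forall (Y Z : 'I_g -> 'M[C]_1) (t : C),
    S Y -> S Z -> 0 < t < 1 ->
    (forall j, X j = t *: Y j + (1 - t) *: Z j) ->
    forall j, Y j = X j /\ Z j = X j.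

End Defs.

Arguments adj {R p q} M.
Arguments herm {R n} M.
Arguments psd {R n} M.
Arguments sa_tuple {R k n} X.
Arguments LMIbounded {R h d} A.
Arguments conj_closed2 {R h d} A.
Arguments concat {R g k n} X Y _.
Arguments unit_equiv {R g p q} Y X.
Arguments euclid_extreme {R g} S X.
Arguments LMIdom {R h d} A n X.
Arguments proj {R g k} K n X.
Arguments free_extreme {R g} K n X.

(* Main.v *)
Require Import Defs.
From mathcomp Require Import all_boot all_order all_algebra.
From mathcomp Require Import complex mxtens reals spectral sesquilinear.
From mathcomp Require Import ring.
Import Order.TTheory GRing.Theory Num.Theory.
Local Open Scope ring_scope.

Section Basic.
Context {R : realType}.
Local Notation C := (R[i]).

Lemma adjE {p q} (M : 'M[C]_(p, q)) : adj M = map_mx (@Num.conj C) M^T.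
Proof. by []. Qed.

Lemma adjK {p q} (M : 'M[C]_(p, q)) : adj (adj M) = M.
Proof. by apply/matrixP=> a b; rewrite !mxE conjCK. Qed.

Lemma adjM {p q r} (M : 'M[C]_(p, q)) (N : 'M[C]_(q, r)) :
  adj (M *m N) = adj N *m adj M.
Proof.
apply/matrixP=> a b; rewrite !mxE rmorph_sum; apply: eq_bigr => c _.
by rewrite !mxE rmorphM mulrC.
Qed.

Lemma adjD {p q} (M N : 'M[C]_(p, q)) : adj (M + N) = adj M + adj N.
Proof. by apply/matrixP=> a b; rewrite !mxE rmorphD. Qed.

Lemma adjN {p q} (M : 'M[C]_(p, q)) : adj (- M) = - adj M.
Proof. by apply/matrixP=> a b; rewrite !mxE rmorphN. Qed.

Lemma adjB {p q} (M N : 'M[C]_(p, q)) : adj (M - N) = adj M - adj N.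
Proof. by rewrite adjD adjN. Qed.

Lemma adjZ {p q} (c : C) (M : 'M[C]_(p, q)) : adj (c *: M) = c^* *: adj M.
Proof. by apply/matrixP=> a b; rewrite !mxE rmorphM. Qed.

Lemma adj0 {p q} : adj (0 : 'M[C]_(p, q)) = 0.
Proof. by apply/matrixP=> a b; rewrite !mxE rmorph0. Qed.

Lemma adj_scalar {p} (c : C) : adj (c%:M : 'M[C]_p) = c^*%:M.
Proof.
by apply/matrixP=> a b; rewrite !mxE rmorphMn eq_sym.
Qed.

Lemma adj1 {p} : adj (1%:M : 'M[C]_p) = 1%:M.
Proof. by rewrite adj_scalar rmorph1. Qed.

Lemma adj_sum {p q} (I : finType) (F : I -> 'M[C]_(p, q)) :
  adj (\sum_i F i) = \sum_i adj (F i).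
Proof.
apply/matrixP=> a b; rewrite !mxE summxE rmorph_sum summxE.
by apply: eq_bigr => c _; rewrite !mxE.
Qed.

Lemma adj_tens {m n p q} (M : 'M[C]_(m, n)) (N : 'M[C]_(p, q)) :
  adj (M *t N) = adj M *t adj N.
Proof.
by apply/matrixP=> a b; rewrite !mxE rmorphM.
Qed.

Lemma adj_row_mx {p q1 q2} (M : 'M[C]_(p, q1)) (N : 'M[C]_(p, q2)) :
  adj (row_mx M N) = col_mx (adj M) (adj N).
Proof. by rewrite adjE tr_row_mx map_col_mx. Qed.

Lemma adj_col_mx {p1 p2 q} (M : 'M[C]_(p1, q)) (N : 'M[C]_(p2, q)) :
  adj (col_mx M N) = row_mx (adj M) (adj N).
Proof. by rewrite adjE tr_col_mx map_row_mx. Qed.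

Lemma adj11 (M : 'M[C]_1) : adj M 0 0 = (M 0 0)^*.
Proof. by rewrite !mxE. Qed.

Lemma tensmxDr {m n p q} (M : 'M[C]_(m, n)) (N1 N2 : 'M[C]_(p, q)) :
  M *t (N1 + N2) = M *t N1 + M *t N2.
Proof.
by apply/matrixP=> a b; rewrite !mxE mulrDr.
Qed.

Lemma tensmxNr {m n p q} (M : 'M[C]_(m, n)) (N : 'M[C]_(p, q)) :
  M *t (- N) = - (M *t N).
Proof.
by apply/matrixP=> a b; rewrite !mxE mulrN.
Qed.

Lemma tensmxZr {m n p q} (c : C) (M : 'M[C]_(m, n)) (N : 'M[C]_(p, q)) :
  M *t (c *: N) = c *: (M *t N).
Proof.
by apply/matrixP=> a b; rewrite !mxE mulrCA.
Qed.

Lemma tensmx_sumr {m n p q} (I : finType) (M : 'M[C]_(m, n))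
    (F : I -> 'M[C]_(p, q)) :
  M *t (\sum_i F i) = \sum_i M *t F i.
Proof.
apply/matrixP=> a b; rewrite !mxE !summxE mulr_sumr; apply: eq_bigr => c _.
by rewrite !mxE.
Qed.

Lemma tensmx11 {m p} : (1%:M : 'M[C]_m) *t (1%:M : 'M[C]_p) = 1%:M.
Proof.
apply/matrixP=> a b; rewrite !mxE.
rewrite -(inj_eq (can_inj (@mxtens_unindexK m p))).
case: (mxtens_unindex a) (mxtens_unindex b) => a1 a2 [b1 b2] /=.
rewrite xpair_eqE.
by case: (a1 == b1); case: (a2 == b2); rewrite ?mulr1n ?mulr0n ?mulr1 ?mulr0 ?mul0r.
Qed.

Definition qf {n} (M : 'M[C]_n) (v : 'cV[C]_n) : C := (adj v *m M *m v) 0 0.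

Lemma qfE {n} (M : 'M[C]_n) v :
  qf M v = \sum_b \sum_a ((v a 0)^* * M a b * v b 0).
Proof.
rewrite /qf mxE; apply: eq_bigr => b _; rewrite mxE mulr_suml.
by apply: eq_bigr => a _; rewrite !mxE.
Qed.

Lemma qf1E {n} (v : 'cV[C]_n) : qf 1%:M v = \sum_a `|v a 0| ^+ 2.
Proof.
rewrite /qf mulmx1 !mxE; apply: eq_bigr => a _; by rewrite !mxE normCKC.
Qed.

Lemma qf1_ge0 {n} (v : 'cV[C]_n) : 0 <= qf 1%:M v.
Proof. by rewrite qf1E sumr_ge0 // => a _; rewrite exprn_ge0. Qed.

Lemma qf1_eq0 {n} (v : 'cV[C]_n) : qf 1%:M v = 0 -> v = 0.
Proof.
rewrite qf1E => /psumr_eq0P H; apply/matrixP => a b; rewrite (ord1 b) mxE.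
have /eqP := H (fun i _ => exprn_ge0 _ (normr_ge0 _)) a isT.
by rewrite expf_eq0 /= normr_eq0 => /eqP.
Qed.

Lemma norm_le_qf1 {n} (v : 'cV[C]_n) a : `|v a 0| ^+ 2 <= qf 1%:M v.
Proof.
rewrite qf1E (bigD1 a) //= lerDl sumr_ge0 // => b _.
by rewrite exprn_ge0.
Qed.

Lemma amgm {x y : C} : 0 <= x -> 0 <= y -> x * y <= x ^+ 2 + y ^+ 2.
Proof.
move=> hx hy.
have := real_leVge (ger0_real hx) (ger0_real hy); case/orP => hxy.
- apply: (le_trans (ler_wpM2r hy hxy)); rewrite -expr2 lerDr exprn_ge0 //.
- apply: (le_trans (ler_wpM2l hx hxy)); rewrite -expr2 lerDl exprn_ge0 //.
Qed.

Lemma qf_bound {n} (M : 'M[C]_n) :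
  exists c, 0 <= c /\ forall v, `|qf M v| <= c * qf 1%:M v.
Proof.
exists (\sum_b \sum_a (2 * `|M a b|)); split.
  by apply: sumr_ge0 => b _; apply: sumr_ge0 => a _; rewrite mulr_ge0.
move=> v; rewrite qfE; set N := qf 1%:M v.
apply: (le_trans (ler_norm_sum _ _ _)); rewrite mulr_suml.
apply: ler_sum => a _; apply: (le_trans (ler_norm_sum _ _ _)); rewrite mulr_suml.
apply: ler_sum => b _.
rewrite !normrM norm_conjC.
have -> : `|v b 0| * `|M b a| * `|v a 0| = `|M b a| * (`|v b 0| * `|v a 0|).
  by rewrite mulrAC mulrC.
have -> : 2 * `|M b a| * N = `|M b a| * (2 * N) by rewrite mulrCA mulrA.
apply: ler_wpM2l => //.
apply: (le_trans (amgm (normr_ge0 _) (normr_ge0 _) : _ <= _)).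
by rewrite mulr2n mulrDl mul1r lerD ?norm_le_qf1.
Qed.

Lemma qf_real {n} (M : 'M[C]_n) v : herm M -> qf M v \is Num.real.
Proof.
move=> hM; rewrite CrealE /qf -adj11 !adjM adjK hM mulmxA.
by [].
Qed.

Lemma qf_mul {n m} (M : 'M[C]_n) (B : 'M[C]_(n, m)) v :
  qf M (B *m v) = qf (adj B *m M *m B) v.
Proof. by rewrite /qf adjM !mulmxA. Qed.

Lemma qfD {n} (M N : 'M[C]_n) v : qf (M + N) v = qf M v + qf N v.
Proof. by rewrite /qf mulmxDr mulmxDl mxE. Qed.

Lemma qfN {n} (M : 'M[C]_n) v : qf (- M) v = - qf M v.
Proof. by rewrite /qf mulmxN mulNmx mxE. Qed.

Lemma qfZ {n} c (M : 'M[C]_n) v : qf (c *: M) v = c * qf M v.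
Proof. by rewrite /qf -scalemxAr -scalemxAl mxE. Qed.

Lemma qf_sum {n} (I : finType) (F : I -> 'M[C]_n) v :
  qf (\sum_i F i) v = \sum_i qf (F i) v.
Proof.
rewrite /qf mulmx_sumr mulmx_suml summxE; apply: eq_bigr => i _ //.
Qed.

Lemma herm_compress {n m} (M : 'M[C]_n) (B : 'M[C]_(n, m)) :
  herm M -> herm (adj B *m M *m B).
Proof. by move=> hM; rewrite /herm !adjM adjK hM mulmxA. Qed.

Lemma psd_compress {n m} (M : 'M[C]_n) (B : 'M[C]_(n, m)) :
  psd M -> psd (adj B *m M *m B).
Proof.
move=> [hM pM]; split; first exact: herm_compress.
by move=> v; change (0 <= qf (adj B *m M *m B) v); rewrite -qf_mul; apply: pM.
Qed.

Lemma nneg_conj (c : C) : 0 <= c -> c^* = c.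
Proof. by move=> hc; apply: conj_Creal; apply: ger0_real. Qed.

Lemma psdD {n} (M N : 'M[C]_n) : psd M -> psd N -> psd (M + N).
Proof.
move=> [hM pM] [hN pN]; split; first by rewrite /herm adjD hM hN.
by move=> v; change (0 <= qf (M + N) v); rewrite qfD addr_ge0 //; [apply: pM | apply: pN].
Qed.

Lemma psdZ {n} c (M : 'M[C]_n) : 0 <= c -> psd M -> psd (c *: M).
Proof.
move=> hc [hM pM]; split; first by rewrite /herm adjZ hM nneg_conj.
by move=> v; change (0 <= qf (c *: M) v); rewrite qfZ mulr_ge0 //; apply: pM.
Qed.

Lemma psd_sum {n} (I : finType) (F : I -> 'M[C]_n) :
  (forall i, psd (F i)) -> psd (\sum_i F i).
Proof.
move=> H; split.
  by rewrite /herm adj_sum; apply: eq_bigr => i _; case: (H i).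
move=> v; change (0 <= qf (\sum_i F i) v); rewrite qf_sum sumr_ge0 // => i _.
by case: (H i) => _ /(_ v).
Qed.

Lemma qf_expand {n} (P : 'M[C]_n) u w t :
  qf P (u - t *: w) = qf P u - t * (adj u *m P *m w) 0 0
     - t^* * (adj w *m P *m u) 0 0 + t^* * t * qf P w.
Proof.
rewrite /qf adjB adjZ !(mulmxBl, mulmxBr) -!scalemxAl -!scalemxAr.
set X1 := adj u *m P *m u; set X2 := adj u *m P *m w.
set X3 := adj w *m P *m u; set X4 := adj w *m P *m w.
rewrite !mxE.
ring.
Qed.

Lemma psd_sq_bound {n} (P : 'M[C]_n) :
  psd P -> exists c, 0 < c /\ forall u, qf 1%:M (P *m u) <= c * qf P u.
Proof.
move=> [hP pP]; have [c2 [c2ge0 hc2]] := qf_bound P.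
have cgt0 : 0 < c2 + 1 by rewrite ltr_wpDl.
exists (c2 + 1); split => // u.
set w := P *m u; set t := (c2 + 1)^-1.
have tgt0 : 0 < t by rewrite invr_gt0.
have tconj : t^* = t by rewrite nneg_conj // ltW.
have adjw : adj w = adj u *m P by rewrite /w adjM hP.
have E1 : (adj u *m P *m w) 0 0 = qf 1%:M w by rewrite /qf mulmx1 adjw.
have E2 : (adj w *m P *m u) 0 0 = qf 1%:M w.
  by rewrite /qf mulmx1 adjw /w !mulmxA.
have := pP (u - t *: w); rewrite -/(qf _ _) qf_expand E1 E2 tconj.
set q := qf P u; set s := qf 1%:M w; set r := qf P w.
have r0 : 0 <= r := pP w.
have rs : r <= c2 * s by rewrite -(ger0_norm r0); apply: hc2.
have s0 : 0 <= s := qf1_ge0 w.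
have tc2 : t * c2 <= 1.
  by rewrite /t mulrC ler_pdivrMr // mul1r lerDl.
have H1 : t * t * r <= t * s.
  rewrite -mulrA; apply: ler_wpM2l; first exact: ltW.
  apply: (le_trans (ler_wpM2l (ltW tgt0) rs)).
  by rewrite mulrA -[X in _ <= X]mul1r ler_wpM2r.
move=> H.
have H2 : 0 <= q - t * s.
  apply: (le_trans H).
  have -> : q - t * s - t * s + t * t * r = (q - t * s) + (t * t * r - t * s).
    by ring.
  by rewrite -[X in _ <= X]addr0 lerD2l subr_le0.
have H3 : t * s <= q by rewrite -subr_ge0.
have -> : s = (c2 + 1) * (t * s) by rewrite mulrA divff ?mul1r // gt_eqF.
by apply: ler_wpM2l => //; exact: ltW.
Qed.

Lemma psd_ker {n} (P : 'M[C]_n) u : psd P -> qf P u = 0 -> P *m u = 0.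
Proof.
move=> hP hq; have [c [cgt0 hc]] := psd_sq_bound P hP.
apply: qf1_eq0; apply/eqP; rewrite eq_le qf1_ge0 andbT.
by have := hc u; rewrite hq mulr0.
Qed.

Lemma dom {n} (P H : 'M[C]_n) : psd P -> herm H ->
  (forall x : 'cV[C]_n, P *m x = 0 -> H *m x = 0) ->
  exists e, 0 < e /\ psd (P - e *: H) /\ psd (P + e *: H).
Proof.
move=> hP hH hker.
set K := cokermx P.
have colK : forall (M : 'M[C]_n) (j : 'I_n), (M *m col j K) = col j (M *m K).
  by move=> M j; apply/matrixP => a b; rewrite !mxE; apply: eq_bigr => c _; rewrite !mxE.
have HK : H *m K = 0.
  apply/matrixP => a j.
  have := hker (col j K); rewrite !colK mulmx_coker.
  have -> : col j (0 : 'M[C]_n) = 0 by apply/matrixP => ? ?; rewrite !mxE.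
  move=> /(_ erefl) /matrixP /(_ a 0); rewrite !mxE => ->.
  by [].
have HP : (H <= P)%MS by rewrite submxE HK.
set G := pinvmx P.
have E1 : H *m G *m P = H := mulmxKpV HP.
have E2 : P *m adj G *m H = H.
  by case: (hP) => hPh _; have := congr1 adj E1; rewrite !adjM hH hPh mulmxA.
set M := adj G *m H *m G.
have EH : H = adj P *m M *m P.
  by case: hP => hP' _; rewrite hP' /M -{1}E2 -{1}E1 !mulmxA.
have [c1 [c1ge0 hc1]] := qf_bound M.
have [c [cgt0 hc]] := psd_sq_bound P hP.
have Kb : forall u, `|qf H u| <= c1 * c * qf P u.
  move=> u; rewrite EH -qf_mul; apply: (le_trans (hc1 _)).
  by rewrite -mulrA; apply: ler_wpM2l => //; apply: hc.
set e := (c1 * c + 1)^-1.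
have Kge0 : 0 <= c1 * c by rewrite mulr_ge0 // ltW.
have egt0 : 0 < e by rewrite invr_gt0 ltr_wpDl.
have eK : e * (c1 * c) <= 1.
  by rewrite /e mulrC ler_pdivrMr ?ltr_wpDl // mul1r lerDl.
have econj : e^* = e by rewrite nneg_conj // ltW.
case: hP => hPh pP.
have key : forall u (s : C), s = 1 \/ s = -1 -> 0 <= qf P u - s * (e * qf H u).
  move=> u s hs.
  have hr : qf H u \is Num.real := qf_real H u hH.
  have q0 : 0 <= qf P u := pP u.
  have h1 : s * (e * qf H u) <= qf P u.
    have : s * qf H u <= `|qf H u|.
      case: hs => ->; first by rewrite mul1r real_ler_norm.
      by rewrite mulN1r -normrN real_ler_norm // rpredN.
    move=> hs'.
    rewrite mulrCA; apply: (le_trans (ler_wpM2l (ltW egt0) hs')).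
    apply: (le_trans (ler_wpM2l (ltW egt0) (Kb u))).
    by rewrite mulrA -[X in _ <= X]mul1r ler_wpM2r.
  by rewrite subr_ge0.
exists e; split => //; split; split.
- by rewrite /herm adjB adjZ econj hPh hH.
- move=> u; change (0 <= qf (P - e *: H) u).
  by rewrite qfD qfN qfZ -[e * _]mul1r; apply: key; left.
- by rewrite /herm adjD adjZ econj hPh hH.
- move=> u; change (0 <= qf (P + e *: H) u).
  rewrite qfD qfZ.
  have -> : qf P u + e * qf H u = qf P u - (-1) * (e * qf H u) by rewrite mulN1r opprK.
  by apply: key; right.
Qed.
Definition Lf {h d n} (A : 'I_h -> 'M[C]_d) (Z : 'I_h -> 'M[C]_n) : 'M[C]_(d * n) :=
  \sum_(i < h) (A i *t Z i).

Lemma LMIdomE {h d n} (A : 'I_h -> 'M[C]_d) (Z : 'I_h -> 'M[C]_n) :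
  LMIdom A n Z <-> sa_tuple Z /\ psd (1%:M - Lf A Z).
Proof. by []. Qed.

Lemma Lf_compress {h d n m} (A : 'I_h -> 'M[C]_d) (Z : 'I_h -> 'M[C]_n)
    (W : 'M[C]_(n, m)) (W' : 'M[C]_(n, m)) :
  ((1%:M : 'M[C]_d) *t adj W) *m Lf A Z *m ((1%:M : 'M[C]_d) *t W') =
  Lf A (fun i => adj W *m Z i *m W').
Proof.
rewrite /Lf mulmx_sumr mulmx_suml; apply: eq_bigr => i _.
by rewrite tensmx_mul tensmx_mul mul1mx mulmx1.
Qed.

Lemma Lf_ext {h d n} (A : 'I_h -> 'M[C]_d) (Z Z' : 'I_h -> 'M[C]_n) :
  (forall i, Z i = Z' i) -> Lf A Z = Lf A Z'.
Proof. by move=> E; apply: eq_bigr => i _; rewrite E. Qed.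

Lemma LMIdom_ext {h d n} (A : 'I_h -> 'M[C]_d) (Z Z' : 'I_h -> 'M[C]_n) :
  (forall i, Z i = Z' i) -> LMIdom A n Z -> LMIdom A n Z'.
Proof.
move=> E [hs hp]; split; first by move=> i; rewrite -E.
by change (psd (1%:M - Lf A Z)) in hp; rewrite (Lf_ext A _ _ E) in hp.
Qed.

Lemma LMIdom_compress {h d n m} (A : 'I_h -> 'M[C]_d) (Z : 'I_h -> 'M[C]_n)
    (W : 'M[C]_(n, m)) :
  adj W *m W = 1%:M -> LMIdom A n Z -> LMIdom A m (fun i => adj W *m Z i *m W).
Proof.
move=> hW [hs hp]; split; first by move=> i; apply: herm_compress.
have := psd_compress _ ((1%:M : 'M[C]_d) *t W) hp.
rewrite adj_tens adj1 mulmxBr mulmxBl mulmx1 tensmx_mul mulmx1 hW tensmx11.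
by rewrite Lf_compress.
Qed.

Lemma herm_Lf {h d n} (A : 'I_h -> 'M[C]_d) (Z : 'I_h -> 'M[C]_n) :
  (forall i, herm (A i)) -> sa_tuple Z -> herm (Lf A Z).
Proof.
move=> hA hZ; rewrite /herm /Lf adj_sum; apply: eq_bigr => i _.
by rewrite adj_tens hA hZ.
Qed.

Lemma LfD {h d n} (A : 'I_h -> 'M[C]_d) (Z1 Z2 : 'I_h -> 'M[C]_n) :
  Lf A (fun i => Z1 i + Z2 i) = Lf A Z1 + Lf A Z2.
Proof. by rewrite /Lf -big_split; apply: eq_bigr => i _; rewrite tensmxDr. Qed.

Lemma LfN {h d n} (A : 'I_h -> 'M[C]_d) (Z : 'I_h -> 'M[C]_n) :
  Lf A (fun i => - Z i) = - Lf A Z.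
Proof.
rewrite /Lf -sumrN; apply: eq_bigr => i _; by rewrite tensmxNr.
Qed.

Lemma LfZ {h d n} (A : 'I_h -> 'M[C]_d) c (Z : 'I_h -> 'M[C]_n) :
  Lf A (fun i => c *: Z i) = c *: Lf A Z.
Proof. by rewrite /Lf scaler_sumr; apply: eq_bigr => i _; rewrite tensmxZr. Qed.

Lemma Lf_sum {h d n} (I : finType) (A : 'I_h -> 'M[C]_d)
    (F : I -> 'I_h -> 'M[C]_n) :
  Lf A (fun l => \sum_i F i l) = \sum_i Lf A (F i).
Proof.
rewrite /Lf exchange_big /=; apply: eq_bigr => l _.
by rewrite tensmx_sumr.
Qed.

Lemma LMIdom_comb {m h d n} (A : 'I_h -> 'M[C]_d) (c : 'I_m -> C)
    (Zs : 'I_m -> 'I_h -> 'M[C]_n) :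
  (forall i, 0 <= c i) -> \sum_i c i = 1 -> (forall i, LMIdom A n (Zs i)) ->
  LMIdom A n (fun l => \sum_i c i *: Zs i l).
Proof.
move=> c0 c1 hZ; split.
  move=> l; rewrite /herm adj_sum; apply: eq_bigr => i _.
  by rewrite adjZ nneg_conj //; case: (hZ i) => /(_ l) ->.
change (psd (1%:M - Lf A (fun l => \sum_i c i *: Zs i l))).
rewrite Lf_sum.
have -> : 1%:M - \sum_i Lf A (fun l => c i *: Zs i l) =
          \sum_i c i *: (1%:M - Lf A (Zs i)).
  under [RHS]eq_bigr => i _ do rewrite scalerBr.
  rewrite sumrB.
  have -> : \sum_i c i *: (1%:M : 'M[C]_(d * n)) = 1%:M.
    by rewrite -scaler_suml c1 scale1r.
  by congr (_ - _); apply: eq_bigr => i _; rewrite LfZ.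
by apply: psd_sum => i; apply: psdZ => //; case: (hZ i).
Qed.

Lemma half_half : (2^-1 : C) + 2^-1 = 1.
Proof. by field. Qed.

Lemma LMIdom_avg {h d n} (A : 'I_h -> 'M[C]_d) (Z1 Z2 : 'I_h -> 'M[C]_n) :
  LMIdom A n Z1 -> LMIdom A n Z2 -> LMIdom A n (fun l => 2^-1 *: (Z1 l + Z2 l)).
Proof.
move=> [s1 p1] [s2 p2].
have h0 : (0 : C) <= 2^-1 by rewrite invr_ge0.
split.
  by move=> l; rewrite /herm adjZ adjD s1 s2 nneg_conj.
change (psd (1%:M - Lf A (fun l => 2^-1 *: (Z1 l + Z2 l)))).
rewrite LfZ LfD.
have -> : 1%:M - 2^-1 *: (Lf A Z1 + Lf A Z2) =
          2^-1 *: (1%:M - Lf A Z1) + 2^-1 *: (1%:M - Lf A Z2).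
  have E : (1%:M : 'M[C]_(d * n)) = 2^-1 *: 1%:M + 2^-1 *: 1%:M.
    by rewrite -scalerDl half_half scale1r.
  by rewrite {1}E scalerDr opprD addrACA !scalerBr.
by apply: psdD; apply: psdZ.
Qed.

End Basic.

Section Extreme.
Variable R : realType.
Local Notation C := (R[i]).

Lemma extreme_comb {g} (S : ('I_g -> 'M[C]_1) -> Prop) (X : 'I_g -> 'M[C]_1) :
  euclid_extreme S X ->
  (forall m (c : 'I_m -> C) (y : 'I_m -> 'I_g -> 'M[C]_1),
     (forall i, 0 <= c i) -> \sum_i c i = 1 -> (forall i, S (y i)) ->
     S (fun j => \sum_i c i *: y i j)) ->
  forall m (a : 'I_m -> C) (y : 'I_m -> 'I_g -> 'M[C]_1),
    (forall i, 0 < a i) -> \sum_i a i = 1 -> (forall i, S (y i)) ->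
    (forall j, X j = \sum_i a i *: y i j) -> forall i j, y i j = X j.
Proof.
move=> [SX hX] Sconv m a y apos asum Sy Xe i0.
set t := a i0.
have rest0 : 0 <= \sum_(i | i != i0) a i.
  by apply: sumr_ge0 => i _; apply: ltW.
have asplit : \sum_i a i = t + \sum_(i | i != i0) a i by rewrite (bigD1 i0).
have [t1|tn1] := eqVneq t 1.
  have others : forall i, i != i0 -> False.
    move=> i hi.
    have : \sum_(i | i != i0) a i = 0.
      by apply: (addrI t); rewrite addr0 -asplit asum t1.
    move=> /eqP; rewrite psumr_eq0 => [/allP H|j _]; last exact: ltW.
    have := H i (mem_index_enum i); rewrite hi /= => /eqP ai0.
    by have := apos i; rewrite ai0 ltxx.
  move=> j; rewrite Xe (bigD1 i0) //= big1 ?addr0.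
    by rewrite -/t t1 scale1r.
  by move=> i hi; case: (others i hi).
have tlt1 : t < 1.
  rewrite lt_neqAle tn1 /= -asum asplit lerDl //.
have omt : 1 - t != 0 by rewrite subr_eq0 eq_sym.
have [c ci0 cne] : exists2 c : 'I_m -> C, c i0 = 0 &
    forall i, i != i0 -> c i = a i / (1 - t).
  exists (fun i => if i == i0 then 0 else a i / (1 - t)); first by rewrite eqxx.
  by move=> i hi; rewrite (negbTE hi).
have c0 : forall i, 0 <= c i.
  move=> i; have [->|hi] := eqVneq i i0; first by rewrite ci0.
  by rewrite cne // divr_ge0 ?ltW // subr_gt0.
have csum : \sum_i c i = 1.
  rewrite (bigD1 i0) //= ci0 add0r.
  under eq_bigr => i hi do rewrite (cne i hi).
  rewrite -mulr_suml.
  have -> : \sum_(i | i != i0) a i = 1 - t by rewrite -asum asplit addrC addKr.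
  by rewrite divff.
have Sz := Sconv m c y c0 csum Sy.
have E : forall j, X j = t *: y i0 j + (1 - t) *: (\sum_i c i *: y i j).
  move=> j.
  have -> : (1 - t) *: (\sum_i c i *: y i j) = \sum_(i | i != i0) a i *: y i j.
    rewrite scaler_sumr (bigD1 i0) //= ci0 scale0r scaler0 add0r.
    apply: eq_bigr => i hi; rewrite (cne i hi) scalerA.
    by rewrite mulrCA divff // mulr1.
  by rewrite Xe (bigD1 i0).
have tpos : 0 < t < 1 by rewrite apos tlt1.
by move=> j; case: (hX _ _ t (Sy i0) Sz tpos E j).
Qed.

Section Main.
Variables (g k d : nat) (A : 'I_(g + k) -> 'M[C]_d).
Hypothesis hA : forall i, herm (A i).
Hypothesis hconj : conj_closed2 A.

Lemma concat_l {n} (X : 'I_g -> 'M[C]_n) (Y : 'I_k -> 'M[C]_n) j :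
  concat X Y (lshift k j) = X j.
Proof. by rewrite /concat (unsplitK (inl j : 'I_g + 'I_k)). Qed.

Lemma concat_r {n} (X : 'I_g -> 'M[C]_n) (Y : 'I_k -> 'M[C]_n) j :
  concat X Y (rshift g j) = Y j.
Proof. by rewrite /concat (unsplitK (inr j : 'I_g + 'I_k)). Qed.

Lemma concat_eta {n} (T : 'I_(g + k) -> 'M[C]_n) l :
  concat (fun j => T (lshift k j)) (fun j => T (rshift g j)) l = T l.
Proof. by rewrite /concat; case: splitP => j hj; congr T; apply: val_inj. Qed.

Lemma proj_of {n} (T : 'I_(g + k) -> 'M[C]_n) :
  LMIdom A n T -> proj (LMIdom A) n (fun j => T (lshift k j)).
Proof.
move=> hT; exists (fun j => T (rshift g j)); split.
  by move=> j; case: hT => /(_ (rshift g j)).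
by apply: (LMIdom_ext _ _ _ _ hT) => l; rewrite concat_eta.
Qed.

Lemma proj_ext {n} (X X' : 'I_g -> 'M[C]_n) :
  (forall j, X j = X' j) -> proj (LMIdom A) n X -> proj (LMIdom A) n X'.
Proof.
move=> E [Y [hY hT]]; exists Y; split; first exact: hY.
apply: (LMIdom_ext _ _ _ _ hT) => l; rewrite /concat.
by case: (split l) => j //; rewrite E.
Qed.

Lemma of_proj {n} (X : 'I_g -> 'M[C]_n) :
  proj (LMIdom A) n X ->
  exists T, LMIdom A n T /\ forall j, T (lshift k j) = X j.
Proof.
move=> [Y [hY hT]]; exists (concat X Y); split; first exact: hT.
by move=> j; rewrite concat_l.
Qed.

Lemma S_conv m (c : 'I_m -> C) (y : 'I_m -> 'I_g -> 'M[C]_1) :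
  (forall i, 0 <= c i) -> \sum_i c i = 1 ->
  (forall i, proj (LMIdom A) 1 (y i)) ->
  proj (LMIdom A) 1 (fun j => \sum_i c i *: y i j).
Proof.
move=> c0 c1 hy.
have [T hT] := fin_all_exists (fun i => of_proj _ (hy i)).
have := LMIdom_comb A c T c0 c1 (fun i => (hT i).1).
move=> /proj_of; apply: proj_ext => j.
by apply: eq_bigr => i _; rewrite (hT i).2.
Qed.


Definition hre (N : 'M[C]_1) : 'M[C]_1 := 2^-1 *: (N + map_mx (@Num.conj C) N).

Lemma adj_11 (N : 'M[C]_1) : adj N = map_mx (@Num.conj C) N.
Proof. by apply/matrixP => a b; rewrite (ord1 a) (ord1 b) !mxE. Qed.

Lemma half_add {p q} (M : 'M[C]_(p, q)) : 2^-1 *: (M + M) = M.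
Proof. by rewrite scalerDr -scalerDl half_half scale1r. Qed.

Lemma herm_hre N : herm (hre N).
Proof.
rewrite /herm /hre adjZ adjD !adj_11 nneg_conj ?invr_ge0 //.
have -> : map_mx (@Num.conj C) (map_mx (@Num.conj C) N) = N.
  by apply/matrixP => a b; rewrite !mxE conjCK.
by rewrite addrC.
Qed.

Lemma hre_herm N : herm N -> hre N = N.
Proof. by move=> hN; rewrite /hre -adj_11 hN half_add. Qed.

Lemma hre00 N : (hre N) 0 0 = 2^-1 * (N 0 0 + (N 0 0)^*).
Proof. by rewrite /hre !mxE. Qed.

Lemma adjW_block {n} (T : 'M[C]_n) (u w : 'cV[C]_n) :
  adj (row_mx u w) *m T *m row_mx u w =
  block_mx (adj u *m T *m u) (adj u *m T *m w) (adj w *m T *m u) (adj w *m T *m w).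
Proof. by rewrite adj_row_mx mul_col_mx mul_col_row. Qed.

Definition e0 : 'M[C]_(1 + 1, 1) := col_mx 1%:M 0.
Definition e1 : 'M[C]_(1 + 1, 1) := col_mx 0 1%:M.

Lemma ul_e0 (M : 'M[C]_(1 + 1)) : adj e0 *m M *m e0 = ulsubmx M.
Proof.
rewrite -{1}[M]submxK /e0 adj_col_mx adj1 adj0 mul_row_block !mul1mx !mul0mx.
by rewrite !addr0 mul_row_col mulmx1 mulmx0 addr0.
Qed.

Lemma dl_e1 (M : 'M[C]_(1 + 1)) : adj e1 *m M *m e0 = dlsubmx M.
Proof.
rewrite -{1}[M]submxK /e0 /e1 adj_col_mx adj1 adj0 mul_row_block !mul1mx !mul0mx.
by rewrite !add0r mul_row_col mulmx1 mulmx0 addr0.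
Qed.

Lemma e0e0 : adj e0 *m e0 = 1%:M.
Proof. by rewrite /e0 adj_col_mx adj1 adj0 mul_row_col mulmx1 mulmx0 addr0. Qed.

Lemma e1e0 : adj e1 *m e0 = 0.
Proof. by rewrite /e0 /e1 adj_col_mx adj1 adj0 mul_row_col mulmx1 mulmx0 addr0. Qed.


Lemma LMIdom_shift (p r : 'I_(g + k) -> 'M[C]_1) (s : C) :
  sa_tuple p -> sa_tuple r -> s \is Num.real ->
  psd (1%:M - Lf A p - s *: Lf A r) ->
  LMIdom A 1 (fun l => p l + s *: r l).
Proof.
move=> hp hr hs hP; split.
  by move=> l; rewrite /herm adjD adjZ conj_Creal // hp hr.
change (psd (1%:M - Lf A (fun l => p l + s *: r l))).
by rewrite LfD LfZ opprD addrA.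
Qed.

Variable X : 'I_g -> 'M[C]_1.
Hypothesis hX : euclid_extreme (proj (LMIdom A) 1) X.

Lemma key {n} (T : 'I_(g + k) -> 'M[C]_n) (u w : 'cV[C]_n) :
  LMIdom A n T -> adj u *m u = 1%:M -> adj w *m w = 1%:M -> adj w *m u = 0 ->
  (forall j, adj u *m T (lshift k j) *m u = X j) ->
  forall j, (adj w *m T (lshift k j) *m u) 0 0 +
            ((adj w *m T (lshift k j) *m u) 0 0)^* = 0.
Proof.
move=> hT hu hw hwu hux.
set W := row_mx u w.
have huw : adj u *m w = 0 by rewrite -[w]adjK -adjM hwu adj0.
have hW : adj W *m W = 1%:M.
  by rewrite /W adj_row_mx mul_col_row hu hw hwu huw -scalar_mx_block.
set Z' := fun l => adj W *m T l *m W.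
have hZ' : LMIdom A (1 + 1) Z' := LMIdom_compress A T W hW hT.
have hZc : LMIdom A 2 (fun l => map_mx (@Num.conj C) (Z' l)) := hconj Z' hZ'.
set Z2 := fun l => 2^-1 *: (Z' l + map_mx (@Num.conj C) (Z' l)).
have hZ2 : LMIdom A (1 + 1) Z2 := LMIdom_avg A Z' _ hZ' hZc.
set p := fun l => hre (adj u *m T l *m u).
set r := fun l => hre (adj w *m T l *m u).
have Z2ul : forall l, ulsubmx (Z2 l) = p l.
  move=> l; rewrite /Z2 /Z' /= /W adjW_block map_block_mx add_block_mx.
  by rewrite scale_block_mx block_mxKul.
have Z2dl : forall l, dlsubmx (Z2 l) = r l.
  move=> l; rewrite /Z2 /Z' /= /W adjW_block map_block_mx add_block_mx.
  by rewrite scale_block_mx block_mxKdl.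
have hp : LMIdom A 1 p.
  have := LMIdom_compress A Z2 e0 e0e0 hZ2.
  by apply: LMIdom_ext => l; rewrite ul_e0 Z2ul.
have sar : sa_tuple r by move=> l; apply: herm_hre.
case: (hZ2) => _ pL2.
change (psd (1%:M - Lf A Z2)) in pL2.
case: (hp) => sap pP.
change (psd (1%:M - Lf A p)) in pP.
set P := 1%:M - Lf A p.
set H := Lf A r.
set E0 := (1%:M : 'M[C]_d) *t e0.
set E1 := (1%:M : 'M[C]_d) *t e1.
have hPE : adj E0 *m (1%:M - Lf A Z2) *m E0 = P.
  rewrite /E0 adj_tens adj1 mulmxBr mulmxBl mulmx1 tensmx_mul mulmx1 e0e0 tensmx11.
  rewrite Lf_compress /P; congr (_ - _); apply: Lf_ext => l.
  by rewrite ul_e0 Z2ul.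
have hHE : adj E1 *m (1%:M - Lf A Z2) *m E0 = - H.
  rewrite /E0 /E1 adj_tens adj1 mulmxBr mulmxBl mulmx1 tensmx_mul mulmx1 e1e0 tensmx0.
  rewrite Lf_compress /H sub0r; congr (- _); apply: Lf_ext => l.
  by rewrite dl_e1 Z2dl.
have hker : forall x : 'cV[C]_(d * 1), P *m x = 0 -> H *m x = 0.
  move=> x hx.
  have q0 : qf (1%:M - Lf A Z2) (E0 *m x) = 0.
    by rewrite qf_mul hPE /qf -mulmxA hx mulmx0 mxE.
  have := psd_ker _ _ pL2 q0.
  move=> /(congr1 (fun M => adj E1 *m M)); rewrite mulmx0 !mulmxA hHE.
  by rewrite mulNmx => /eqP; rewrite oppr_eq0 => /eqP.
have hH : herm H by apply: herm_Lf.
have [e [egt0 [pm pp]]] := dom P H pP hH hker.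
have ereal : e \is Num.real by apply: gtr0_real.
have L1 : LMIdom A 1 (fun l => p l + e *: r l).
  by apply: LMIdom_shift; [exact: sap | exact: sar | exact: ereal | exact: pm].
have L2 : LMIdom A 1 (fun l => p l + (- e) *: r l).
  apply: LMIdom_shift; [exact: sap | exact: sar | by rewrite rpredN | ].
  by rewrite scaleNr opprK; exact: pp.
have [SX hXe] := hX.
have hXh : forall j, herm (X j).
  move=> j; have [T0 [hT0 E]] := of_proj _ SX.
  by rewrite -E; case: hT0 => /(_ (lshift k j)).
have pX : forall j, p (lshift k j) = X j.
  by move=> j; rewrite /p /= hux hre_herm.
have S1 := proj_of _ L1.
have S2 := proj_of _ L2.
have S1' : proj (LMIdom A) 1 (fun j => X j + e *: r (lshift k j)).
  by apply: (proj_ext _ _ _ S1) => j /=; rewrite pX.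
have S2' : proj (LMIdom A) 1 (fun j => X j + (- e) *: r (lshift k j)).
  by apply: (proj_ext _ _ _ S2) => j /=; rewrite pX.
have ht : (0 < (2^-1 : C)) && ((2^-1 : C) < 1).
  have h2 : (0 : C) < 2 by rewrite ltr0n.
  apply/andP; split; first by rewrite invr_gt0.
  by rewrite invf_lt1 // ltr1n.
have Ecomb : forall j, X j = 2^-1 *: (X j + e *: r (lshift k j)) +
                         (1 - 2^-1) *: (X j + (- e) *: r (lshift k j)).
  move=> j.
  have -> : (1 : C) - 2^-1 = 2^-1 by rewrite -[X in X - _]half_half addrK.
  by rewrite -scalerDr addrACA scaleNr subrr addr0 half_add.
move=> j.
have [hY _] := hXe _ _ _ S1' S2' ht Ecomb j.
have : e *: r (lshift k j) = 0.
  by apply: (addrI (X j)); rewrite addr0.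
move=> /eqP; rewrite scaler_eq0 (gt_eqF egt0) /= => /eqP hr0.
have := congr1 (fun M : 'M[C]_1 => M 0 0) hr0; rewrite /r /= hre00.
by move=> /eqP; rewrite [X in _ == X]mxE mulf_eq0 invr_eq0 pnatr_eq0 /= => /eqP.
Qed.


Lemma key2 {n} (T : 'I_(g + k) -> 'M[C]_n) (u w : 'cV[C]_n) :
  LMIdom A n T -> adj u *m u = 1%:M -> adj w *m w = 1%:M -> adj w *m u = 0 ->
  (forall j, adj u *m T (lshift k j) *m u = X j) ->
  forall j, adj w *m T (lshift k j) *m u = 0.
Proof.
move=> hT hu hw hwu hux j.
have h1 := key T u w hT hu hw hwu hux j.
have hiw : adj ('i *: w) = - 'i *: adj w by rewrite adjZ conjCi.
have hw' : adj ('i *: w) *m ('i *: w) = 1%:M.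
  rewrite hiw -scalemxAl -scalemxAr hw scalerA mulNr -expr2 sqrCi opprK.
  by rewrite scale1r.
have hwu' : adj ('i *: w) *m u = 0 by rewrite hiw -scalemxAl hwu scaler0.
have h2 := key T u ('i *: w) hT hu hw' hwu' hux j.
set z := (adj w *m T (lshift k j) *m u) 0 0 in h1.
have e2 : (adj ('i *: w) *m T (lshift k j) *m u) 0 0 = - 'i * z.
  by rewrite hiw -!scalemxAl mxE.
have e3 : (- 'i * z)^* = 'i * z^*.
  by rewrite rmorphM rmorphN /= conjCi opprK.
move: h2; rewrite e2 e3 => h2.
have zc : z^* = - z by apply/eqP; rewrite -subr_eq0 opprK addrC h1.
move: h2; rewrite zc mulrN mulNr -opprD => /eqP.
rewrite oppr_eq0 -mulrDr mulf_eq0 (negbTE (neq0Ci _)) /= => /eqP hz.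
have z0 : z = 0.
  have : z *+ 2 = 0 by rewrite mulr2n.
  by move/eqP; rewrite mulrn_eq0 => /eqP.
by apply/matrixP => a b; rewrite (ord1 a) (ord1 b) [RHS]mxE; exact: z0.
Qed.


Lemma rowcol00 {m n p} (M : 'M[C]_(m, n)) (N : 'M[C]_(n, p)) a b :
  (row a M *m col b N) 0 0 = (M *m N) a b.
Proof. by rewrite !mxE; apply: eq_bigr => c _; rewrite !mxE. Qed.

Lemma final_part {n} (T : 'I_(g + k) -> 'M[C]_n) (Y : 'I_g -> 'M[C]_n)
    (u : 'cV[C]_n) :
  LMIdom A n T -> (forall j, T (lshift k j) = Y j) -> adj u *m u = 1%:M ->
  (forall j, adj u *m Y j *m u = X j) ->
  exists p (Z : 'I_g -> 'M[C]_p), proj (LMIdom A) p Z /\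
    unit_equiv Y (fun j => block_mx (X j) 0 0 (Z j)).
Proof.
case: n T Y u => [|n'] T Y u hT hTY hu huY.
  have : (adj u *m u) 0 0 = 0 by rewrite mxE big_ord0.
  by rewrite hu mxE /= => /eqP; rewrite oner_eq0.
set Src : 'M[C]_(n'.+1) := \matrix_(a, b) (adj u) 0 b.
set S : 'M[C]_(1 + n') := schmidt Src.
have hS : S *m adj S = 1%:M.
  by apply/unitarymxP; apply: schmidt_unitarymx.
have hS' : adj S *m S = 1%:M := mulmx1C hS.
set S1 := usubmx S; set S2 := dsubmx S.
have Sdec : S = col_mx S1 S2 by rewrite vsubmxK.
have [h11 h12 h21 h22] : [/\ S1 *m adj S1 = 1%:M, S1 *m adj S2 = 0,
                             S2 *m adj S1 = 0 & S2 *m adj S2 = 1%:M].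
  move: hS; rewrite Sdec adj_col_mx mul_col_row (scalar_mx_block 1 n').
  by move=> /eq_block_mx [-> -> -> ->].
have hsub : (adj u <= S1)%MS.
  have := row_schmidt_sub Src 0.
  rewrite (big_pred1 (0 : 'I_n'.+1)); last first.
    by move=> x; rewrite /= leqn0 -[RHS]val_eqE.
  rewrite genmxE.
  have -> : row 0 Src = adj u.
    by apply/rowP => b; rewrite !mxE.
  have -> : row 0 (schmidt Src) = S1.
    by apply/rowP => b; rewrite !mxE; congr (S _ b); apply: val_inj.
  by [].
have [mu hmu] := sub_rVP hsub.
have hu' : u = mu^* *: adj S1 by rewrite -[u]adjK hmu adjZ.
have hmm : mu * mu^* = 1.
  move: hu; rewrite hmu hu' -scalemxAl -scalemxAr h11 scalerA.
  move=> /matrixP /(_ 0 0); rewrite !mxE /= mulr1n.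
  by rewrite mulr1.
have mu0 : mu^* != 0.
  by apply/eqP => h0; move: hmm; rewrite h0 mulr0 => /eqP; rewrite eq_sym oner_eq0.
have hYh : forall j, herm (Y j).
  by move=> j; rewrite -hTY; case: hT => /(_ (lshift k j)).
have hadjrow : forall a, adj (row a S2) = col a (adj S2).
  by move=> a; apply/matrixP => x y; rewrite !mxE.
have DL : forall j, S2 *m Y j *m adj S1 = 0.
  move=> j; apply/row_matrixP => a; rewrite !row_mul row0.
  set w := adj (row a S2).
  have hw : adj w *m w = 1%:M.
    apply/matrixP => x y; rewrite (ord1 x) (ord1 y) /w adjK hadjrow rowcol00.
    by rewrite h22 !mxE !eqxx.
  have hwu : adj w *m u = 0.
    by rewrite /w adjK hu' -scalemxAr -row_mul h21 row0 scaler0.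
  have huT : forall j, adj u *m T (lshift k j) *m u = X j.
    by move=> j'; rewrite hTY.
  have := key2 T u w hT hu hw hwu huT j.
  rewrite /w adjK hTY hu' -scalemxAr => /eqP; rewrite scaler_eq0 (negbTE mu0) /=.
  by move=> /eqP.
have UR : forall j, S1 *m Y j *m adj S2 = 0.
  by move=> j; have := congr1 adj (DL j); rewrite !adjM adjK hYh adj0 mulmxA.
have UL : forall j, S1 *m Y j *m adj S1 = X j.
  move=> j; rewrite -huY hmu hu' -scalemxAl -scalemxAl -scalemxAr scalerA.
  by rewrite hmm scale1r.
set Wc := adj S2.
have hWc : adj Wc *m Wc = 1%:M by rewrite /Wc adjK.
have hZ := LMIdom_compress A T Wc hWc hT.
exists n', (fun j => S2 *m Y j *m adj S2); split.
  apply: (proj_ext _ _ _ (proj_of _ hZ)) => j /=.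
  by rewrite /Wc adjK hTY.
set U : 'M[C]_(n'.+1, 1 + n') := adj S.
have hU1 : U *m adj U = 1%:M by rewrite /U adjK.
have hU2 : adj U *m U = 1%:M by rewrite /U adjK.
exists U; split => //; split => // j.
have blockE : adj U *m Y j *m U = block_mx (X j) 0 0 (S2 *m Y j *m adj S2).
  rewrite /U adjK Sdec adj_col_mx mul_col_mx mul_col_row.
  by rewrite UL UR DL.
by rewrite -blockE !mulmxA hU1 mul1mx -mulmxA hU1 mulmx1.
Qed.


Lemma main_in : free_extreme (proj (LMIdom A)) 1 X.
Proof.
have [SX hXe] := hX.
split; first exact: SX.
move=> m ns Xs V hK hV hsum hdec i; right.
set a := fun i => (adj (V i) *m V i) 0 0.
have ha : forall i, 0 < a i.
  move=> i'; have E : a i' = qf 1%:M (V i') by rewrite /a /qf mulmx1.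
  rewrite E lt_neqAle qf1_ge0 andbT eq_sym; apply/eqP => /qf1_eq0 h0.
  by move: (hV i'); rewrite h0 eqxx.
set s := fun i => sqrtC (a i).
have hs : forall i, 0 < s i by move=> i'; rewrite /s sqrtC_gt0.
have hs2 : forall i, s i * s i = a i by move=> i'; rewrite -expr2 /s sqrtCK.
have hsc : forall i, (s i)^* = s i by move=> i'; rewrite nneg_conj // ltW.
have hVV : forall i, adj (V i) *m V i = a i *: 1%:M.
  by move=> i'; apply/matrixP => x y; rewrite (ord1 x) (ord1 y) [RHS]mxE [X in _ * X]mxE eqxx mulr1.
set u := fun i => (s i)^-1 *: V i.
have hVu : forall i, V i = s i *: u i.
  by move=> i'; rewrite /u scalerA divff ?scale1r // gt_eqF.
have hu : forall i, adj (u i) *m u i = 1%:M.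
  move=> i'; have hsic : ((s i')^-1)^* = (s i')^-1.
    by rewrite nneg_conj // invr_ge0 ltW.
  rewrite /u adjZ hsic -scalemxAl -scalemxAr hVV scalerA scalerA.
  rewrite -hs2 -invfM mulVf ?scale1r //.
  by rewrite mulf_neq0 // gt_eqF.
have [T hT] := fin_all_exists (fun i => of_proj _ (hK i)).
set y := fun i j => adj (u i) *m Xs i j *m u i.
have hy : forall i, proj (LMIdom A) 1 (y i).
  move=> i'; have := proj_of _ (LMIdom_compress A (T i') (u i') (hu i') (hT i').1).
  by apply: proj_ext => j /=; rewrite (hT i').2.
have hsa : \sum_i a i = 1.
  have := congr1 (fun M : 'M[C]_1 => M 0 0) hsum; rewrite /= summxE => ->.
  by rewrite mxE.
have hdec' : forall j, X j = \sum_i a i *: y i j.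
  move=> j; rewrite hdec; apply: eq_bigr => i' _.
  rewrite (hVu i') adjZ hsc -scalemxAl -scalemxAr -scalemxAl scalerA.
  by rewrite hs2.
have hyX := extreme_comb _ _ hX S_conv _ _ _ ha hsa hy hdec'.
have := final_part (T i) (Xs i) (u i) (hT i).1 (hT i).2 (hu i) (hyX i).
by [].
Qed.

End Main.
End Extreme.

Theorem mainTheorem11 (R : realType) (g k d : nat)
    (A : 'I_(g + k) -> 'M[R[i]]_d) :
  (forall i, herm (A i)) ->
  LMIbounded A ->
  conj_closed2 A ->
  forall X : 'I_g -> 'M[R[i]]_1,
    euclid_extreme (proj (LMIdom A) 1) X ->
    free_extreme (proj (LMIdom A)) 1 X.
Proof.
move=> hA _ hconj X hX.
by apply: main_in.
Qed.
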